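(* As $N\to\infty$, $$\frac{1}{N}\sum_{n\le N} R_4(n)\sim \frac{1}{6}\log^3 N .$$
   Context: For a positive integer $n$, $R_4(n)$ denotes the number of ordered quadruples $(x,y,z,w)$ of positive integers with $n = xyzw + x + y + z + w$. *)

(* Defs.v *)
From Stdlib Require Import Reals Arith.
From Coquelicot Require Import Coquelicot.

Fixpoint sum_from_1 (f : nat -> nat) (k : nat) : nat :=
  match k with
  | 0 => 0%nat
  | S k' => (sum_from_1 f k' + f (S k'))%nat
  end.

(* R_4(n) = #{(x,y,z,w) positive integers : n = xyzw + x + y + z + w}.
   Any solution has x,y,z,w <= n, so counting over [1,n]^4 is exact. *)
Definition R4 (n : nat) : nat :=
  sum_from_1 (fun x =>
  sum_from_1 (fun y =>
  sum_from_1 (fun z =>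
  sum_from_1 (fun w =>
    if Nat.eqb n ((x * y * z * w + x + y + z + w)%nat) then 1%nat else 0%nat) n) n) n) n.

(* Main.v *)
Require Import Defs.
From Stdlib Require Import Reals Lra Lia Psatz Arith FunctionalExtensionality.
From Coquelicot Require Import Coquelicot.

Lemma sum_ext f g K : (forall i, 1 <= i <= K -> f i = g i)%nat ->
  sum_from_1 f K = sum_from_1 g K.
Proof. induction K; simpl; intros H; auto. rewrite IHK, H; auto; try lia; intros; apply H; lia. Qed.

Lemma sum_le f g K : (forall i, 1 <= i <= K -> f i <= g i)%nat ->
  (sum_from_1 f K <= sum_from_1 g K)%nat.
Proof. induction K; simpl; intros H; auto. pose proof (H (S K)). assert (sum_from_1 f K <= sum_from_1 g K)%nat by (apply IHK; intros; apply H; lia). lia. Qed.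

Lemma sum_zero f K : (forall i, 1 <= i <= K -> f i = 0)%nat -> sum_from_1 f K = 0%nat.
Proof. induction K; simpl; intros H; auto. rewrite IHK, H; auto; try lia; intros; apply H; lia. Qed.

Lemma sum_extend f K M : (K <= M)%nat -> (forall i, K < i <= M -> f i = 0)%nat ->
  sum_from_1 f M = sum_from_1 f K.
Proof. induction M; intros H1 H2. assert (K = 0)%nat by lia; subst; auto.
  destruct (Nat.eq_dec K (S M)). subst; auto.
  simpl. rewrite IHM by (try lia; intros; apply H2; lia). rewrite H2 by lia. lia. Qed.

Lemma sum_add f g K : sum_from_1 (fun i => f i + g i)%nat K = (sum_from_1 f K + sum_from_1 g K)%nat.
Proof. induction K; simpl; auto. rewrite IHK; lia. Qed.

Lemma sum_swap (f : nat -> nat -> nat) A B :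
  sum_from_1 (fun i => sum_from_1 (fun j => f i j) B) A =
  sum_from_1 (fun j => sum_from_1 (fun i => f i j) A) B.
Proof. induction A; simpl. symmetry; apply sum_zero; auto.
  rewrite IHA. rewrite <- sum_add. reflexivity. Qed.

Lemma sum_ind_eq t N : (1 <= t)%nat ->
  sum_from_1 (fun n => if Nat.eqb n t then 1 else 0)%nat N = (if Nat.leb t N then 1 else 0)%nat.
Proof. intros Ht. induction N; cbn [sum_from_1]. destruct t; [lia|auto].
  rewrite IHN. destruct (Nat.eqb_spec (S N) t); destruct (Nat.leb_spec t N);
  destruct (Nat.leb_spec t (S N)); lia. Qed.

Lemma le_div_iff c w M : (1 <= c)%nat -> (c * w <= M <-> w <= M / c)%nat.
Proof. intros Hc. pose proof (Nat.div_mod M c ltac:(lia)). pose proof (Nat.mod_upper_bound M c ltac:(lia)).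
  set (q := (M / c)%nat) in *. set (r := (M mod c)%nat) in *. split; intros.
  - destruct (Nat.le_gt_cases w q); auto. assert (c * (q+1) <= c * w)%nat by (apply Nat.mul_le_mono_l; lia). nia.
  - assert (c * w <= c * q)%nat by (apply Nat.mul_le_mono_l; lia). lia. Qed.

Lemma sum_ind_le_min c M K : (1 <= c)%nat ->
  sum_from_1 (fun w => if Nat.leb (c * w) M then 1 else 0)%nat K = Nat.min K (M / c).
Proof. intros Hc. induction K. simpl; auto.
  cbn [sum_from_1]. rewrite IHK. destruct (Nat.leb_spec (c * S K) M) as [h|h].
  - apply le_div_iff in h; auto. lia.
  - assert (~ (S K <= M / c))%nat by (rewrite <- le_div_iff; lia). lia. Qed.

Lemma sum_ind_le c M K : (1 <= c)%nat -> (M <= K)%nat ->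
  sum_from_1 (fun w => if Nat.leb (c * w) M then 1 else 0)%nat K = (M / c)%nat.
Proof. intros. rewrite sum_ind_le_min; auto. pose proof (Nat.Div0.div_le_upper_bound M c M ltac:(nia)). lia. Qed.

Definition e4 n x y z w := (if Nat.eqb n (x*y*z*w+x+y+z+w) then 1 else 0)%nat.

Lemma e4_zero n x y z w : (n < x \/ n < y \/ n < z \/ n < w)%nat -> e4 n x y z w = 0%nat.
Proof. intros H. unfold e4. destruct (Nat.eqb_spec n (x*y*z*w+x+y+z+w)); auto. lia. Qed.

Lemma R4_ext n K : (n <= K)%nat -> R4 n =
  sum_from_1 (fun x => sum_from_1 (fun y => sum_from_1 (fun z => sum_from_1 (fun w =>
     e4 n x y z w) K) K) K) K.
Proof. intros HK. unfold R4.
  assert (I1 : forall x y z, sum_from_1 (fun w => e4 n x y z w) n = sum_from_1 (fun w => e4 n x y z w) K).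
  { intros. symmetry. apply sum_extend; auto. intros; apply e4_zero; lia. }
  assert (I2 : forall x y, sum_from_1 (fun z => sum_from_1 (fun w => e4 n x y z w) n) n =
                           sum_from_1 (fun z => sum_from_1 (fun w => e4 n x y z w) K) K).
  { intros. rewrite (sum_ext _ (fun z => sum_from_1 (fun w => e4 n x y z w) K)) by (intros; apply I1).
    symmetry. apply sum_extend; auto. intros; apply sum_zero; intros; apply e4_zero; lia. }
  assert (I3 : forall x, sum_from_1 (fun y => sum_from_1 (fun z => sum_from_1 (fun w => e4 n x y z w) n) n) n =
                           sum_from_1 (fun y => sum_from_1 (fun z => sum_from_1 (fun w => e4 n x y z w) K) K) K).
  { intros. rewrite (sum_ext _ (fun y => sum_from_1 (fun z => sum_from_1 (fun w => e4 n x y z w) K) K)) by (intros; apply I2).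
    symmetry. apply sum_extend; auto. intros; apply sum_zero; intros; apply sum_zero; intros; apply e4_zero; lia. }
  change (sum_from_1 (fun x => sum_from_1 (fun y => sum_from_1 (fun z => sum_from_1 (fun w => e4 n x y z w) n) n) n) n = 
   sum_from_1 (fun x => sum_from_1 (fun y => sum_from_1 (fun z => sum_from_1 (fun w => e4 n x y z w) K) K) K) K).
  rewrite (sum_ext _ (fun x => sum_from_1 (fun y => sum_from_1 (fun z => sum_from_1 (fun w => e4 n x y z w) K) K) K)) by (intros; apply I3).
  symmetry. apply sum_extend; auto. intros; apply sum_zero; intros; apply sum_zero; intros; apply sum_zero; intros; apply e4_zero; lia.
Qed.

Lemma C_formula N : sum_from_1 R4 N =
  sum_from_1 (fun x => sum_from_1 (fun y => sum_from_1 (fun z =>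
     ((N - (x+y+z)) / (x*y*z+1))%nat) N) N) N.
Proof.
  rewrite (sum_ext _ (fun n => sum_from_1 (fun x => sum_from_1 (fun y => sum_from_1 (fun z => sum_from_1 (fun w =>
     e4 n x y z w) N) N) N) N)) by (intros; apply R4_ext; lia).
  rewrite sum_swap. apply sum_ext; intros x _.
  rewrite sum_swap. apply sum_ext; intros y _.
  rewrite sum_swap. apply sum_ext; intros z Hz.
  rewrite sum_swap.
  transitivity (sum_from_1 (fun w => if Nat.leb ((x*y*z+1) * w) (N - (x+y+z)) then 1 else 0)%nat N).
  - apply sum_ext; intros w Hw. unfold e4. rewrite sum_ind_eq by lia.
    destruct (Nat.leb_spec (x * y * z * w + x + y + z + w) N);
    destruct (Nat.leb_spec ((x*y*z+1) * w) (N - (x+y+z))); nia.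
  - apply sum_ind_le; lia.
Qed.

Fixpoint Q (k M : nat) : nat :=
  match k with
  | 0 => if Nat.eqb M 0 then 0 else 1
  | S k' => sum_from_1 (fun n => Q k' (M / n)) M
  end.

Lemma Q_0 k : Q k 0 = 0%nat.
Proof. destruct k; reflexivity. Qed.

Lemma Q_1 M : Q 1 M = M.
Proof. simpl. transitivity (sum_from_1 (fun _ => 1%nat) M).
  - apply sum_ext. intros i Hi. assert (1 <= M / i)%nat by (apply (proj1 (le_div_iff i 1 M ltac:(lia))); lia).
    destruct (Nat.eqb_spec (M / i) 0); lia.
  - induction M; simpl; auto. rewrite IHM; lia. Qed.

Lemma Q_step j a M K : (1 <= a)%nat -> (M <= K)%nat ->
  sum_from_1 (fun z => Q j (M / (a * z))) K = Q (S j) (M / a).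
Proof. intros Ha HK. simpl.
  assert (M / a <= M)%nat by (apply Nat.Div0.div_le_upper_bound; nia).
  rewrite (sum_extend _ (M / a) K) by (try lia; intros i Hi; rewrite <- Nat.Div0.div_div, Nat.div_small by lia; apply Q_0).
  apply sum_ext; intros. rewrite Nat.Div0.div_div. auto. Qed.

Lemma Q4_repr N K : (N <= K)%nat ->
  sum_from_1 (fun x => sum_from_1 (fun y => sum_from_1 (fun z => (N / (x*y*z))%nat) K) K) K = Q 4 N.
Proof. intros HK.
  transitivity (sum_from_1 (fun x => Q 3 (N / (1 * x))) K).
  2:{ rewrite Q_step by lia. rewrite Nat.div_1_r. auto. }
  apply sum_ext; intros x Hx. rewrite Nat.mul_1_l.
  rewrite <- (Q_step _ x N K) by lia.
  apply sum_ext; intros y Hy.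
  rewrite <- (Q_step _ (x*y) N K) by nia.
  apply sum_ext; intros z Hz. rewrite Q_1. auto. Qed.

Lemma Q3_repr N K : (N <= K)%nat ->
  sum_from_1 (fun x => sum_from_1 (fun y => sum_from_1 (fun z => Q 0 (N / (x*y*z))) K) K) K = Q 3 N.
Proof. intros HK.
  transitivity (sum_from_1 (fun x => Q 2 (N / (1 * x))) K).
  2:{ rewrite Q_step by lia. rewrite Nat.div_1_r. auto. }
  apply sum_ext; intros x Hx. rewrite Nat.mul_1_l.
  rewrite <- (Q_step _ x N K) by lia.
  apply sum_ext; intros y Hy.
  rewrite <- (Q_step _ (x*y) N K) by nia.
  apply sum_ext; intros z Hz. auto. Qed.

Lemma divfacts M c : (1 <= c)%nat -> (c * (M / c) <= M /\ M < c * (M / c + 1))%nat.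
Proof. intros. pose proof (Nat.div_mod M c ltac:(lia)). pose proof (Nat.mod_upper_bound M c ltac:(lia)). nia. Qed.

Lemma ptA N x y z : (1 <= x)%nat -> (1 <= y)%nat -> (1 <= z)%nat ->
  ((N - (x+y+z)) / (x*y*z+1) <= N / (x*y*z))%nat.
Proof. intros. apply le_div_iff; [nia|].
  destruct (divfacts (N - (x+y+z)) (x*y*z+1) ltac:(lia)) as [h _].
  set (q := ((N - (x + y + z)) / (x * y * z + 1))%nat) in *.
  assert (x*y*z*q <= (x*y*z+1)*q)%nat by nia. lia. Qed.

Lemma ptB N x y z : (1 <= x)%nat -> (1 <= y)%nat -> (1 <= z)%nat ->
  (N / (x*y*z) <= (N - (x+y+z)) / (x*y*z+1) + N / (x*y*z*(x*y*z)) + 4 * Q 0 (N / (x*y*z)))%nat.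
Proof. intros. set (a := (x*y*z)%nat). assert (1 <= a)%nat by (unfold a; nia).
  assert (Hs : (x + y + z <= 3 * a)%nat).
  { unfold a. assert (1 <= y*z)%nat by nia. assert (1 <= x*z)%nat by nia. assert (1 <= x*y)%nat by nia.
    assert (x <= x*(y*z))%nat by nia. assert (y <= y*(x*z))%nat by nia. assert (z <= z*(x*y))%nat by nia.
    replace (x*y*z)%nat with (x*(y*z))%nat by ring.
    replace (y*(x*z))%nat with (x*(y*z))%nat in * by ring.
    replace (z*(x*y))%nat with (x*(y*z))%nat in * by ring. lia. }
  set (s := (x+y+z)%nat) in *. clearbody a s.
  set (p := (N / a)%nat). set (q := ((N - s) / (a+1))%nat). set (r := (N / (a*a))%nat).
  destruct (divfacts N a) as [p1 p2]; auto. fold p in p1, p2.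
  destruct (divfacts (N - s) (a+1)) as [q1 q2]; [lia|]. fold q in q1, q2.
  destruct (divfacts N (a*a)) as [r1 r2]; [nia|]. fold r in r1, r2.
  simpl. destruct (Nat.eqb_spec p 0). lia.
  assert (Hq : (q + 1 <= a * (r + 1))%nat).
  { assert (q * a < a * a * (r+1))%nat by nia. assert (q < a * (r+1))%nat by nia. lia. }
  assert (Hp : (a * p < a * (q + r + 5))%nat) by nia.
  assert (p < q + r + 5)%nat by nia. lia. Qed.

Open Scope R_scope.

Fixpoint rsum (f : nat -> R) (k : nat) : R :=
  match k with 0 => 0 | S k' => rsum f k' + f (S k') end.

Lemma rsum_INR f K : INR (sum_from_1 f K) = rsum (fun i => INR (f i)) K.
Proof. induction K; simpl; auto. rewrite plus_INR, IHK; auto. Qed.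

Lemma rsum_le f g K : (forall i, (1 <= i <= K)%nat -> f i <= g i) -> rsum f K <= rsum g K.
Proof. induction K; simpl; intros H. lra. pose proof (H (S K) ltac:(lia)).
  assert (rsum f K <= rsum g K) by (apply IHK; intros; apply H; lia). lra. Qed.

Lemma rsum_scal c f K : rsum (fun i => c * f i) K = c * rsum f K.
Proof. induction K; simpl. ring. rewrite IHK; ring. Qed.

Lemma rsum_nonneg f K : (forall i, (1 <= i <= K)%nat -> 0 <= f i) -> 0 <= rsum f K.
Proof. intros H. assert (E : rsum (fun _ => 0) K = 0) by (clear H; induction K; simpl; [auto| rewrite IHK; ring]).
  rewrite <- E. apply rsum_le; auto. Qed.

Lemma ln_le_sub1 y : 0 < y -> ln y <= y - 1.
Proof. intros. pose proof (exp_ineq1_le (ln y)). rewrite exp_ln in H0; auto. lra. Qed.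

Lemma ln_step m : (1 <= m)%nat -> / INR (S m) <= ln (INR (S m)) - ln (INR m) <= / INR m.
Proof. intros Hm. assert (h1 : 1 <= INR m) by (apply (le_INR 1); auto).
  rewrite S_INR. split.
  - pose proof (ln_le_sub1 (INR m / (INR m + 1)) ltac:(apply Rdiv_lt_0_compat; lra)).
    rewrite ln_div in H by lra.
    assert (INR m / (INR m + 1) - 1 = - / (INR m + 1)) by (field; lra). lra.
  - pose proof (ln_le_sub1 ((INR m + 1) / INR m) ltac:(apply Rdiv_lt_0_compat; lra)).
    rewrite ln_div in H by lra.
    assert ((INR m + 1) / INR m - 1 = / INR m) by (field; lra). lra.
Qed.

Lemma sum_inv_sq K : rsum (fun i => / (INR i * INR i)) K <= 2 - / INR (Nat.max K 1).
Proof. induction K. simpl. lra.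
  simpl rsum. destruct K.
  - simpl. lra.
  - replace (Nat.max (S K) 1) with (S K) in IHK by lia.
    replace (Nat.max (S (S K)) 1) with (S (S K)) by lia.
    assert (1 <= INR (S K)) by (apply (le_INR 1); lia).
    rewrite (S_INR (S K)) in *.
    assert (/ ((INR (S K) + 1) * (INR (S K)+1)) <= / INR (S K) - / (INR (S K) + 1)).
    { replace (/ INR (S K) - / (INR (S K) + 1)) with (/ (INR (S K) * (INR (S K) + 1))) by (field; lra).
      apply Rinv_le_contravar; nra. }
    lra.
Qed.

Open Scope R_scope.

Definition tm (h : R -> R) (x : R) (n : nat) := / INR n * h (ln x - ln (INR n)).

Lemma ln_nat_le x n : (1 <= n)%nat -> INR n <= x -> 0 <= ln x - ln (INR n).
Proof. intros. assert (1 <= INR n) by (apply (le_INR 1); auto).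
  pose proof (ln_le (INR n) x ltac:(lra) H0). lra. Qed.

Lemma sum_upper h H x M : (forall u, 0 <= u -> 0 <= h u) ->
  (forall a b, 0 <= b <= a -> (a - b) * h b <= H a - H b) ->
  INR M <= x -> (1 <= M)%nat ->
  rsum (tm h x) M <= h (ln x) + H (ln x) - H (ln x - ln (INR M)).
Proof. intros Hh HH Hx HM.
  assert (forall m, (1 <= m <= M)%nat -> rsum (tm h x) m <= h (ln x) + H (ln x) - H (ln x - ln (INR m))).
  { induction m; intros Hm. lia. destruct m.
    - simpl. unfold tm. simpl. rewrite ln_1. replace (ln x - 0) with (ln x) by ring. lra.
    - change (rsum (tm h x) (S (S m))) with (rsum (tm h x) (S m) + tm h x (S (S m))).
      pose proof (IHm ltac:(lia)).
      assert (INR (S (S m)) <= x) by (eapply Rle_trans; [apply le_INR; apply Hm| auto]).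
      pose proof (ln_nat_le x (S (S m)) ltac:(lia) H1).
      pose proof (ln_step (S m) ltac:(lia)).
      assert (0 < / INR (S (S m))) by (apply Rinv_0_lt_compat; apply lt_0_INR; lia).
      assert (Hab : 0 <= ln x - ln (INR (S (S m))) <= ln x - ln (INR (S m))) by lra.
      set (b := ln x - ln (INR (S (S m)))) in *.
      set (a := ln x - ln (INR (S m))) in *.
      pose proof (HH a b Hab).
      pose proof (Hh b H2).
      change (tm h x (S (S m))) with (/ INR (S (S m)) * h b).
      assert (/ INR (S (S m)) * h b <= (a - b) * h b).
      { apply Rmult_le_compat_r; auto. unfold a, b. lra. }
      lra. }
  apply H0; lia.
Qed.

Lemma sum_lower h H c k x M : c <= 0 -> 0 <= k -> (forall u, 0 <= u -> c <= h u) ->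
  (forall a b, 0 <= b <= a -> H a - H b <= (a - b) * h a + k * ((a - b) * (a - b))) ->
  INR M <= x -> (1 <= M)%nat ->
  H (ln x) - H (ln x - ln (INR M)) + c - 2 * k <= rsum (tm h x) M.
Proof. intros Hc0 Hk Hh HH Hx HM.
  assert (Cl : forall m, (m < M)%nat -> H (ln x) - H (ln x - ln (INR (S m))) + (c - 2 * k) * (1 - / INR (S m)) <= rsum (tm h x) m).
  { induction m; intros Hm.
    - simpl. rewrite ln_1. replace (ln x - 0) with (ln x) by ring. replace (1 - / 1) with 0 by field. lra.
    - change (rsum (tm h x) (S m)) with (rsum (tm h x) m + tm h x (S m)).
      pose proof (IHm ltac:(lia)) as IH.
      assert (Hxx : INR (S (S m)) <= x) by (eapply Rle_trans; [apply le_INR; apply Hm| auto]).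
      pose proof (ln_nat_le x (S (S m)) ltac:(lia) Hxx) as Hb0.
      pose proof (ln_step (S m) ltac:(lia)) as Hst.
      assert (Hp : 0 < / INR (S (S m))) by (apply Rinv_0_lt_compat; apply lt_0_INR; lia).
      assert (Hab : 0 <= ln x - ln (INR (S (S m))) <= ln x - ln (INR (S m))) by lra.
      assert (Hsq : / INR (S m) * / INR (S m) <= 2 * (/ INR (S m) - / INR (S (S m)))).
      { rewrite (S_INR (S m)). assert (1 <= INR (S m)) by (apply (le_INR 1); lia).
        replace (/ INR (S m) - / (INR (S m) + 1)) with (/ INR (S m) * / (INR (S m) + 1)) by (field; lra).
        assert (/ INR (S m) <= 2 * / (INR (S m) + 1)).
        { apply Rmult_le_reg_r with (INR (S m) * (INR (S m) + 1)). nra.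
          field_simplify; try lra. }
        assert (0 < / INR (S m)) by (apply Rinv_0_lt_compat; lra). nra. }
      set (b := ln x - ln (INR (S (S m)))) in *.
      set (a := ln x - ln (INR (S m))) in *.
      pose proof (HH a b Hab) as HHab.
      assert (Ha0 : 0 <= a) by lra.
      pose proof (Hh a Ha0) as Hha.
      change (tm h x (S m)) with (/ INR (S m) * h a).
      assert (Hd : a - b = ln (INR (S (S m))) - ln (INR (S m))) by (unfold a, b; ring).
      assert (P1 : 0 <= (/ INR (S m) - (a - b)) * (h a - c)) by (apply Rmult_le_pos; lra).
      assert (P2 : c * ((a - b) - / INR (S (S m))) <= 0).
      { apply Rmult_le_0_r; lra. }
      assert (P3 : (a - b) * (a - b) <= / INR (S m) * / INR (S m)).
      { apply Rmult_le_compat; lra. }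
      assert (P4 : k * ((a - b) * (a - b)) <= k * (2 * (/ INR (S m) - / INR (S (S m))))).
      { apply Rmult_le_compat_l; lra. }
      nra. }
  destruct M as [|m]. lia.
  pose proof (Cl m ltac:(lia)) as Cm. change (rsum (tm h x) (S m)) with (rsum (tm h x) m + / INR (S m) * h (ln x - ln (INR (S m)))).
  pose proof (ln_nat_le x (S m) ltac:(lia) Hx) as Hb0.
  pose proof (Hh _ Hb0) as Hhb.
  assert (1 <= INR (S m)) by (apply (le_INR 1); lia).
  assert (0 < / INR (S m)) by (apply Rinv_0_lt_compat; lra).
  assert (/ INR (S m) <= 1) by (rewrite <- Rinv_1; apply Rinv_le_contravar; lra).
  assert (/ INR (S m) * c <= / INR (S m) * h (ln x - ln (INR (S m)))) by (apply Rmult_le_compat_l; lra).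
  nra.
Qed.

Open Scope R_scope.

Definition adm (x : R) (M : nat) := 1 <= x /\ INR M <= x < INR M + 1.

Definition goodU (F : nat -> nat) (p : R -> R) := forall y K, adm y K -> INR (F K) <= y * p (ln y).
Definition goodL (F : nat -> nat) (p : R -> R) := forall y K, adm y K -> y * p (ln y) <= INR (F K).

Lemma adm_M x M : adm x M -> (1 <= M)%nat.
Proof. intros [H1 [H2 H3]]. destruct M; [simpl in H3; lra| lia]. Qed.

Lemma adm_t x M : adm x M -> 0 <= ln x - ln (INR M) <= 1.
Proof. intros A. pose proof (adm_M _ _ A). destruct A as [H1 [H2 H3]].
  assert (1 <= INR M) by (apply (le_INR 1); auto).
  split. pose proof (ln_le (INR M) x ltac:(lra) H2). lra.
  assert (Hx2 : x <= 2 * INR M) by lra.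
  pose proof (ln_le x (2 * INR M) ltac:(lra) Hx2) as Hl. rewrite ln_mult in Hl by lra.
  pose proof (ln_le_sub1 2 ltac:(lra)). lra. Qed.

Lemma adm_div x M n : adm x M -> (1 <= n <= M)%nat -> adm (x / INR n) (M / n) /\
   ln (x / INR n) = ln x - ln (INR n).
Proof. intros A Hn. pose proof (adm_M _ _ A). destruct A as [H1 [H2 H3]].
  assert (1 <= INR n) by (apply (le_INR 1); lia).
  assert (INR n <= INR M) by (apply le_INR; lia).
  destruct (divfacts M n ltac:(lia)) as [d1 d2].
  assert (d3 : (M + 1 <= n * (M / n + 1))%nat) by lia. clear d2. rename d3 into d2.
  apply le_INR in d1. apply le_INR in d2. rewrite plus_INR in d2. rewrite mult_INR in d1, d2. rewrite plus_INR in d2. simpl INR in d2 at 2.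
  split. 2: apply ln_div; lra.
  simpl INR in d2. unfold adm, Rdiv.
  assert (Hv : INR n * / INR n = 1) by (field; lra).
  assert (Hv0 : 0 < / INR n) by (apply Rinv_0_lt_compat; lra).
  set (v := / INR n) in *. set (q := INR (M / n)) in *. clearbody v q.
  split; [|split].
  - assert (INR n * v <= x * v) by (apply Rmult_le_compat_r; lra). lra.
  - assert (INR n * q * v <= x * v) by (apply Rmult_le_compat_r; lra).
    replace (INR n * q * v) with (q * (INR n * v)) in H5 by ring. rewrite Hv in H5. lra.
  - assert (x * v < INR n * (q + 1) * v) by (apply Rmult_lt_compat_r; lra).
    replace (INR n * (q+1) * v) with ((q+1) * (INR n * v)) in H5 by ring. rewrite Hv in H5. lra.
Qed.

Lemma stepU k h H : goodU (Q k) h -> (forall u, 0 <= u -> 0 <= h u) ->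
  (forall a b, 0 <= b <= a -> (a - b) * h b <= H a - H b) ->
  forall x M, adm x M -> INR (Q (S k) M) <= x * (h (ln x) + H (ln x) - H (ln x - ln (INR M))).
Proof. intros G Hh HH x M A. pose proof (adm_M _ _ A) as HM.
  change (Q (S k) M) with (sum_from_1 (fun n => Q k (M / n)) M). rewrite rsum_INR.
  eapply Rle_trans. 2:{ apply Rmult_le_compat_l. destruct A; lra. apply (sum_upper h H); auto; apply A. }
  rewrite <- rsum_scal. apply rsum_le. intros n Hn.
  destruct (adm_div x M n A Hn) as [A' E]. pose proof (G _ _ A'). rewrite E in H0.
  unfold tm. replace (x * (/ INR n * h (ln x - ln (INR n)))) with (x / INR n * h (ln x - ln (INR n))) by (unfold Rdiv; ring).
  auto.
Qed.

Lemma stepL k h H c kk : goodL (Q k) h -> c <= 0 -> 0 <= kk -> (forall u, 0 <= u -> c <= h u) ->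
  (forall a b, 0 <= b <= a -> H a - H b <= (a - b) * h a + kk * ((a - b) * (a - b))) ->
  forall x M, adm x M -> x * (H (ln x) - H (ln x - ln (INR M)) + c - 2 * kk) <= INR (Q (S k) M).
Proof. intros G Hc Hk Hh HH x M A. pose proof (adm_M _ _ A) as HM.
  change (Q (S k) M) with (sum_from_1 (fun n => Q k (M / n)) M). rewrite rsum_INR.
  eapply Rle_trans. { apply Rmult_le_compat_l. destruct A; lra. apply (sum_lower h H c kk); auto; apply A. }
  rewrite <- rsum_scal. apply rsum_le. intros n Hn.
  destruct (adm_div x M n A Hn) as [A' E]. pose proof (G _ _ A'). rewrite E in H0.
  unfold tm. replace (x * (/ INR n * h (ln x - ln (INR n)))) with (x / INR n * h (ln x - ln (INR n))) by (unfold Rdiv; ring).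
  auto.
Qed.

Open Scope R_scope.

Lemma U1 : goodU (Q 1) (fun _ => 1).
Proof. intros y K A. rewrite Q_1. destruct A; lra. Qed.

Lemma U2 : goodU (Q 2) (fun u => 1 + u).
Proof. intros x M A. pose proof (adm_t _ _ A).
  pose proof (stepU 1 (fun _ => 1) (fun u => u) U1 ltac:(intros; lra) ltac:(intros; lra) x M A).
  destruct A as [A1 _]. nra. Qed.

Lemma U3 : goodU (Q 3) (fun u => 1 + 2 * u + u * u / 2).
Proof. intros x M A. pose proof (adm_t _ _ A) as T.
  pose proof (stepU 2 (fun u => 1 + u) (fun u => u + u * u / 2) U2 ltac:(intros; lra)) as S.
  assert (HH : forall a b, 0 <= b <= a -> (a - b) * (1 + b) <= (a + a * a / 2) - (b + b * b / 2)).
  { intros a b Hab. assert (E : (a + a * a / 2) - (b + b * b / 2) - (a - b) * (1 + b) = (a - b) * (a - b) / 2) by field.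
    nra. }
  specialize (S HH x M A). cbv beta in S.
  set (t := ln x - ln (INR M)) in *. set (L := ln x) in *. clearbody L t.
  destruct A as [A1 _].
  assert (0 <= t + t * t / 2)  by nra.
  assert (x * (t + t * t / 2) >= 0) by nra. nra. Qed.

Lemma U4 x M : adm x M -> INR (Q 4 M) <= x * (1 + 3 * ln x + 3 * (ln x * ln x) / 2 + ln x * ln x * ln x / 6).
Proof. intros A. pose proof (adm_t _ _ A) as T.
  pose proof (stepU 3 (fun u => 1 + 2 * u + u * u / 2) (fun u => u + u * u + u * u * u / 6) U3 ltac:(intros; nra)) as S.
  assert (HH : forall a b, 0 <= b <= a -> (a - b) * (1 + 2 * b + b * b / 2) <= (a + a * a + a * a * a / 6) - (b + b * b + b * b * b / 6)).
  { intros a b Hab. assert (E : (a + a * a + a * a * a / 6) - (b + b * b + b * b * b / 6) - (a - b) * (1 + 2 * b + b * b / 2) = (a - b) * ((a - b) + (a - b) * (a + 2 * b) / 6)) by field.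
    assert (0 <= (a - b) * (a + 2 * b)) by nra.
    assert (0 <= (a - b) * ((a - b) + (a - b) * (a + 2 * b) / 6)) by (apply Rmult_le_pos; nra). nra. }
  specialize (S HH x M A). cbv beta in S.
  set (t := ln x - ln (INR M)) in *. set (L := ln x) in *. clearbody L t.
  destruct A as [A1 _].
  assert (0 <= t + t * t + t * t * t / 6) by (assert (0 <= t * t * t) by (apply Rmult_le_pos; nra); nra).
  assert (x * (t + t * t + t * t * t / 6) >= 0) by nra. nra. Qed.

Lemma rsum_sub f g K : rsum (fun i => f i - g i) K = rsum f K - rsum g K.
Proof. induction K; simpl. ring. rewrite IHK; ring. Qed.

Lemma rsum_one K : rsum (fun _ => 1) K = INR K.
Proof. induction K; simpl rsum. auto. rewrite IHK, S_INR. ring. Qed.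

Lemma Lo2 : goodL (Q 2) (fun u => u - 2).
Proof. intros x M A. pose proof (adm_t _ _ A) as T. pose proof (adm_M _ _ A) as HM.
  change (Q 2 M) with (sum_from_1 (fun n => Q 1 (M / n)) M). rewrite rsum_INR.
  apply Rle_trans with (rsum (fun n => x * tm (fun _ => 1) x n - 1) M).
  2:{ apply rsum_le. intros n Hn. destruct (adm_div x M n A Hn) as [A' E]. rewrite Q_1.
      destruct A' as [_ [_ B]]. unfold tm. unfold Rdiv in B. lra. }
  rewrite rsum_sub, rsum_one, rsum_scal.
  pose proof (sum_lower (fun _ => 1) (fun u => u) 0 0 x M ltac:(lra) ltac:(lra) ltac:(intros; lra) ltac:(intros; lra)
     ltac:(apply A) HM) as S. cbv beta in S.
  destruct A as [A1 [A2 A3]].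
  set (t := ln x - ln (INR M)) in *. set (L := ln x) in *. clearbody L t.
  assert (x * (L - 1) <= x * rsum (tm (fun _ : R => 1) x) M) by (apply Rmult_le_compat_l; lra).
  nra. Qed.

Lemma Lo3 : goodL (Q 3) (fun u => u * u / 2 - 2 * u - 2).
Proof. intros x M A. pose proof (adm_t _ _ A) as T.
  pose proof (stepL 2 (fun u => u - 2) (fun u => u * u / 2 - 2 * u) (-2) 0 Lo2 ltac:(lra) ltac:(lra) ltac:(intros; lra)) as S.
  assert (HH : forall a b, 0 <= b <= a -> (a * a / 2 - 2 * a) - (b * b / 2 - 2 * b) <= (a - b) * (a - 2) + 0 * ((a - b) * (a - b))).
  { intros a b Hab. assert (E : (a * a / 2 - 2 * a) - (b * b / 2 - 2 * b) - (a - b) * (a - 2) = - (a - b) * (a - b) / 2) by field.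
    nra. }
  specialize (S HH x M A). cbv beta in S.
  set (t := ln x - ln (INR M)) in *. set (L := ln x) in *. clearbody L t.
  destruct A as [A1 _].
  assert (t * t / 2 - 2 * t <= 0) by nra.
  assert (x * (t * t / 2 - 2 * t) <= 0) by nra. nra. Qed.

Lemma Lo4 x M : adm x M -> x * (ln x * ln x * ln x / 6 - ln x * ln x - 2 * ln x - 7) <= INR (Q 4 M).
Proof. intros A. pose proof (adm_t _ _ A) as T.
  pose proof (stepL 3 (fun u => u * u / 2 - 2 * u - 2) (fun u => u * u * u / 6 - u * u - 2 * u) (-4) 1 Lo3 ltac:(lra) ltac:(lra) ltac:(intros u _; pose proof (Rle_0_sqr (u - 2)) as Hq; unfold Rsqr in Hq; nra)) as S.
  assert (HH : forall a b, 0 <= b <= a -> (a * a * a / 6 - a * a - 2 * a) - (b * b * b / 6 - b * b - 2 * b) <= (a - b) * (a * a / 2 - 2 * a - 2) + 1 * ((a - b) * (a - b))).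
  { intros a b Hab. assert (E : (a * a * a / 6 - a * a - 2 * a) - (b * b * b / 6 - b * b - 2 * b) - ((a - b) * (a * a / 2 - 2 * a - 2) + 1 * ((a - b) * (a - b))) = - ((a - b) * (a - b)) * (2 * a + b) / 6) by field.
    assert (0 <= ((a - b) * (a - b)) * (2 * a + b)) by (apply Rmult_le_pos; nra). nra. }
  specialize (S HH x M A). cbv beta in S.
  set (t := ln x - ln (INR M)) in *. set (L := ln x) in *. clearbody L t.
  destruct A as [A1 _].
  assert (t * t * t <= 1) by (assert (t * t <= 1) by nra; nra).
  assert (t * t * t / 6 - t * t - 2 * t <= 1) by nra.
  assert (x * (t * t * t / 6 - t * t - 2 * t) <= x) by nra. nra. Qed.

Definition S3 (f : nat -> nat -> nat -> nat) N :=
  sum_from_1 (fun x => sum_from_1 (fun y => sum_from_1 (fun z => f x y z) N) N) N.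

Lemma S3_le f g N : (forall x y z, (1 <= x)%nat -> (1 <= y)%nat -> (1 <= z)%nat -> (f x y z <= g x y z)%nat) ->
  (S3 f N <= S3 g N)%nat.
Proof. intros H. unfold S3. apply sum_le; intros. apply sum_le; intros. apply sum_le; intros. apply H; lia. Qed.

Lemma S3_add f g N : S3 (fun x y z => f x y z + g x y z)%nat N = (S3 f N + S3 g N)%nat.
Proof. unfold S3. rewrite <- sum_add. apply sum_ext; intros. rewrite <- sum_add. apply sum_ext; intros.
  rewrite <- sum_add. auto. Qed.

Lemma sum_scal c f K : sum_from_1 (fun i => c * f i)%nat K = (c * sum_from_1 f K)%nat.
Proof. induction K; simpl. lia. rewrite IHK. lia. Qed.

Lemma S3_scal c f N : S3 (fun x y z => c * f x y z)%nat N = (c * S3 f N)%nat.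
Proof. unfold S3. rewrite <- sum_scal. apply sum_ext; intros. rewrite <- sum_scal. apply sum_ext; intros.
  rewrite <- sum_scal. auto. Qed.

Definition Eterm N := S3 (fun x y z => N / (x*y*z*(x*y*z)))%nat N.

Lemma C_upper N : (sum_from_1 R4 N <= Q 4 N)%nat.
Proof. rewrite C_formula, <- (Q4_repr N N) by lia. apply (S3_le _ _ N). intros. apply ptA; auto. Qed.

Lemma C_lower N : (Q 4 N <= sum_from_1 R4 N + Eterm N + 4 * Q 3 N)%nat.
Proof. rewrite C_formula, <- (Q4_repr N N), <- (Q3_repr N N) by lia. unfold Eterm.
  fold (S3 (fun x y z => (N - (x + y + z)) / (x * y * z + 1))%nat N).
  fold (S3 (fun x y z => Q 0 (N / (x * y * z)))%nat N).
  fold (S3 (fun x y z => (N / (x * y * z)))%nat N).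
  rewrite <- S3_scal, <- !S3_add. apply S3_le. intros. apply ptB; auto. Qed.

Open Scope R_scope.

Lemma INR_div_le N b : (1 <= b)%nat -> INR (N / b) <= INR N * / INR b.
Proof. intros Hb. destruct (divfacts N b Hb) as [d1 _]. apply le_INR in d1. rewrite mult_INR in d1.
  assert (1 <= INR b) by (apply (le_INR 1); auto).
  assert (Hv : INR b * / INR b = 1) by (field; lra).
  assert (0 < / INR b) by (apply Rinv_0_lt_compat; lra).
  assert (INR b * INR (N / b) * / INR b <= INR N * / INR b) by (apply Rmult_le_compat_r; lra).
  replace (INR b * INR (N / b) * / INR b) with (INR (N / b) * (INR b * / INR b)) in H1 by ring.
  rewrite Hv in H1. lra. Qed.

Lemma sq_bound K : rsum (fun i => / (INR i * INR i)) K <= 2.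
Proof. pose proof (sum_inv_sq K). assert (1 <= INR (Nat.max K 1)) by (apply (le_INR 1); lia).
  assert (0 < / INR (Nat.max K 1)) by (apply Rinv_0_lt_compat; lra). lra. Qed.

Lemma inv_sq_pos i : (1 <= i)%nat -> 0 <= / (INR i * INR i).
Proof. intros. assert (1 <= INR i) by (apply (le_INR 1); auto). apply Rlt_le, Rinv_0_lt_compat; nra. Qed.

Lemma E_bound N : INR (Eterm N) <= 8 * INR N.
Proof. unfold Eterm, S3. rewrite rsum_INR.
  apply Rle_trans with (rsum (fun x => INR N * / (INR x * INR x) * 4) N).
  2:{ replace (8 * INR N) with (INR N * 4 * 2) by ring.
      replace (fun x => INR N * / (INR x * INR x) * 4) with (fun x => (INR N * 4) * / (INR x * INR x)).
      2:{ apply functional_extensionality; intros; ring. }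
      rewrite (rsum_scal (INR N * 4) (fun x => / (INR x * INR x))). apply Rmult_le_compat_l. pose proof (pos_INR N); lra. apply sq_bound. }
  apply rsum_le. intros x Hx. rewrite rsum_INR.
  apply Rle_trans with (rsum (fun y => INR N * / (INR x * INR x) * / (INR y * INR y) * 2) N).
  2:{ replace (fun y => INR N * / (INR x * INR x) * / (INR y * INR y) * 2) with (fun y => (INR N * / (INR x * INR x) * 2) * / (INR y * INR y)).
      2:{ apply functional_extensionality; intros; ring. }
      rewrite (rsum_scal (INR N * / (INR x * INR x) * 2) (fun y => / (INR y * INR y))). replace (INR N * / (INR x * INR x) * 4) with ((INR N * / (INR x * INR x) * 2) * 2) by ring.
      apply Rmult_le_compat_l. pose proof (pos_INR N). pose proof (inv_sq_pos x ltac:(lia)). nra. apply sq_bound. }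
  apply rsum_le. intros y Hy. rewrite rsum_INR.
  apply Rle_trans with (rsum (fun z => INR N * / (INR x * INR x) * / (INR y * INR y) * / (INR z * INR z)) N).
  2:{ rewrite (rsum_scal (INR N * / (INR x * INR x) * / (INR y * INR y)) (fun z => / (INR z * INR z))). apply Rmult_le_compat_l. pose proof (pos_INR N). pose proof (inv_sq_pos x ltac:(lia)).
      pose proof (inv_sq_pos y ltac:(lia)). apply Rmult_le_pos; [apply Rmult_le_pos|]; auto. apply sq_bound. }
  apply rsum_le. intros z Hz. eapply Rle_trans. apply INR_div_le; nia.
  right. rewrite !mult_INR. field.
  assert (1 <= INR x) by (apply (le_INR 1); lia). assert (1 <= INR y) by (apply (le_INR 1); lia).
  assert (1 <= INR z) by (apply (le_INR 1); lia). repeat split; lra.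
Qed.

Open Scope R_scope.

Lemma adm_N N : (1 <= N)%nat -> adm (INR N) N.
Proof. intros. assert (1 <= INR N) by (apply (le_INR 1); auto). unfold adm; lra. Qed.

Lemma bounds N : (2 <= N)%nat ->
  let L := ln (INR N) in let v := / L in
  1 - 18 * v - 60 * (v * v) - 114 * (v * v * v) <= (INR (sum_from_1 R4 N) / INR N) / (L ^ 3 / 6)
  <= 1 + 9 * v + 18 * (v * v) + 6 * (v * v * v).
Proof. intros HN L v.
  assert (A : adm (INR N) N) by (apply adm_N; lia).
  assert (HN2 : 2 <= INR N) by (apply (le_INR 2); auto).
  assert (HL : 0 < L) by (unfold L; rewrite <- ln_1; apply ln_increasing; lra).
  pose proof (U4 _ _ A) as Up. pose proof (Lo4 _ _ A) as Lo. pose proof (U3 _ _ A) as U3'.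
  cbv beta in U3'. fold L in Up, Lo, U3'.
  pose proof (C_upper N) as c1. apply le_INR in c1.
  pose proof (C_lower N) as c2. apply le_INR in c2. rewrite !plus_INR, mult_INR in c2. simpl INR in c2 at 3.
  pose proof (E_bound N) as Eb.
  set (c := INR (sum_from_1 R4 N)) in *. set (n := INR N) in *.
  set (q4 := INR (Q 4 N)) in *. set (q3 := INR (Q 3 N)) in *. set (e := INR (Eterm N)) in *.
  assert (cu : c <= n * (1 + 3 * L + 3 * (L * L) / 2 + L * L * L / 6)) by lra.
  assert (cl : n * (L * L * L / 6 - 3 * (L * L) - 10 * L - 19) <= c).
  { replace (INR 4) with 4 in c2 by (simpl; ring). lra. }
  clearbody c n L. clear c1 c2 Up Lo U3' Eb q4 q3 e A.
  assert (Hv : L * v = 1) by (unfold v; field; lra).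
  assert (Hv0 : 0 < v) by (unfold v; apply Rinv_0_lt_compat; lra).
  assert (HLv : L = / v) by (unfold v; rewrite Rinv_inv; auto).
  clearbody v.
  assert (E : c / n / (L ^ 3 / 6) = (c / n) * (6 * (v * v * v))).
  { replace v with (/ L) by (apply Rmult_eq_reg_l with L; [rewrite Hv; field|]; lra). field. lra. }
  rewrite E.
  assert (0 < n) by lra.
  assert (cu' : c / n <= 1 + 3 * L + 3 * (L * L) / 2 + L * L * L / 6).
  { apply Rmult_le_reg_r with n; auto. replace (c / n * n) with c by (field; lra). lra. }
  assert (cl' : L * L * L / 6 - 3 * (L * L) - 10 * L - 19 <= c / n).
  { apply Rmult_le_reg_r with n; auto. replace (c / n * n) with c by (field; lra). lra. }
  assert (P3 : 0 < 6 * (v * v * v)) by (repeat apply Rmult_lt_0_compat; lra).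
  split.
  - eapply Rle_trans. 2: apply Rmult_le_compat_r; [lra| exact cl'].
    right. rewrite HLv. field. lra.
  - eapply Rle_trans. apply Rmult_le_compat_r; [lra| exact cu'].
    right. rewrite HLv. field. lra.
Qed.

Lemma lim_v : is_lim_seq (fun N => / ln (INR N)) 0.
Proof.
  assert (H : is_lim_seq (fun N => ln (INR N)) p_infty).
  { unfold is_lim_seq. eapply filterlim_comp. apply is_lim_seq_INR. apply is_lim_ln_p. }
  pose proof (is_lim_seq_inv _ _ H ltac:(discriminate)). simpl in H0. exact H0. Qed.

Lemma lim_poly a b c : is_lim_seq (fun N => 1 + a * / ln (INR N) + b * (/ ln (INR N) * / ln (INR N)) + c * (/ ln (INR N) * / ln (INR N) * / ln (INR N))) 1.
Proof. pose proof lim_v as H.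
  replace (Finite 1) with (Finite (1 + a * 0 + b * (0 * 0) + c * (0 * 0 * 0))) by (f_equal; ring).
  apply is_lim_seq_plus'. apply is_lim_seq_plus'. apply is_lim_seq_plus'.
  apply is_lim_seq_const.
  apply is_lim_seq_mult'. apply is_lim_seq_const. auto.
  apply is_lim_seq_mult'. apply is_lim_seq_const. apply is_lim_seq_mult'; auto.
  apply is_lim_seq_mult'. apply is_lim_seq_const. apply is_lim_seq_mult'; [apply is_lim_seq_mult'|]; auto.
Qed.

Theorem theorem4 :
  is_lim_seq
    (fun N : nat =>
       (INR (sum_from_1 R4 N) / INR N) / (ln (INR N) ^ 3 / 6))
    1.
Proof.
  apply is_lim_seq_le_le_loc with
    (u := fun N => 1 + (-18) * / ln (INR N) + (-60) * (/ ln (INR N) * / ln (INR N)) + (-114) * (/ ln (INR N) * / ln (INR N) * / ln (INR N)))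
    (w := fun N => 1 + 9 * / ln (INR N) + 18 * (/ ln (INR N) * / ln (INR N)) + 6 * (/ ln (INR N) * / ln (INR N) * / ln (INR N))).
  - exists 2%nat. intros N HN. pose proof (bounds N HN) as B. cbv zeta in B. lra.
  - apply lim_poly.
  - apply lim_poly.
Qed.
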